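(* Every semigroup $S$ satisfying Condition $( * )$ is a naturally partially ordered monoid, i.e. the relation $a\leq b\iff bS\subseteq aS$ on $S$ is a partial order.
   Context: For a commutative semigroup $S$ with zero $0$, $A(s)=\{x\in S: xs=0\}$. A semigroup $S$ satisfies Condition $( * )$ if: (1) $S$ is a commutative monoid with a zero; (2) $A(s)\neq\{0\}$ for every non-identity $s\in S$; (3) $A(s)=A(t)$ implies $s=t$ for all $s,t\in S$. *)

(* Defs.v *)
Definition Ann {S : Type} (mul : S -> S -> S) (zero : S) (s : S) : S -> Prop :=
  fun x => mul x s = zero.

Definition ConditionStar {S : Type} (mul : S -> S -> S) : Prop :=
  (forall x y z, mul x (mul y z) = mul (mul x y) z) /\
  (forall x y, mul x y = mul y x) /\
  exists (one zero : S),
    (forall x, mul one x = x /\ mul x one = x) /\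
    (forall x, mul zero x = zero /\ mul x zero = zero) /\
    (forall s, s <> one -> exists x, Ann mul zero s x /\ x <> zero) /\
    (forall s t, (forall x, Ann mul zero s x <-> Ann mul zero t x) -> s = t).

Definition nat_le {S : Type} (mul : S -> S -> S) (a b : S) : Prop :=
  forall x, (exists y, x = mul b y) -> exists z, x = mul a z.

Definition is_partial_order {S : Type} (R : S -> S -> Prop) : Prop :=
  (forall a, R a a) /\
  (forall a b c, R a b -> R b c -> R a c) /\
  (forall a b, R a b -> R b a -> a = b).

(* Main.v *)
Require Import Defs.

Theorem lemma2 (S : Type) (mul : S -> S -> S) :
  ConditionStar mul -> is_partial_order (nat_le mul).
Proof.
  intros [assoc [comm [one [zero [Hone [Hzero [_ H3]]]]]]].
  unfold is_partial_order, nat_le.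
  split; [|split].
  - intros a x H; exact H.
  - intros a b c Hab Hbc x Hx. apply Hab. apply Hbc. exact Hx.
  - intros a b Hab Hba.
    destruct (Hab b (ex_intro _ one (eq_sym (proj2 (Hone b))))) as [u Hu].
    destruct (Hba a (ex_intro _ one (eq_sym (proj2 (Hone a))))) as [v Hv].
    apply H3. intros x; unfold Ann; split; intros Hx.
    + rewrite Hu, assoc, Hx. apply (proj1 (Hzero u)).
    + rewrite Hv, assoc, Hx. apply (proj1 (Hzero v)).
Qed.
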